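(* For $\epsilon \in [0,1]$, let $F_\epsilon$ be the solution of $$F_\epsilon''(t) = (\epsilon - 3Q(t)^2)F_\epsilon(t), \quad t > 0, \qquad F_\epsilon(0) = 0,\ F_\epsilon'(0) = -1.$$ Then $F_\epsilon$ changes its sign at least once on $(0,\infty)$. Moreover, its first positive zero $t_\epsilon$ satisfies $t_\epsilon \ge t_0 > 0$, where $t_0$ is the first positive zero of $F_0$ (the solution for $\epsilon = 0$).
   Context: $Q(t)$, $t\ge 0$, denotes the radial profile of the positive radial ground state of $\Delta\phi - \phi + |\phi|^2\phi = 0$ on $\mathbb{R}^3$; it solves $-Q'' - \frac{2}{t}Q' + Q - Q^3 = 0$. *)

(* Defs.v *)
From Stdlib Require Import Reals Lra.
Open Scope R_scope.

(* Q is the radial profile of the positive radial ground state of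
   Delta phi - phi + phi^3 = 0 on R^3: a positive solution on [0,oo) of
   Q'' + (2/t) Q' - Q + Q^3 = 0 (t > 0), regular at the origin
   (Q continuous at 0+, Q'(0+) = 0) and decaying to 0 at infinity.
   By uniqueness of the ground state (Coffman, Kwong) these properties
   determine Q.  Values of Q for t < 0 are irrelevant. *)
Definition ground_state_profile (Q : R -> R) : Prop :=
  (forall t, 0 <= t -> 0 < Q t) /\
  exists dQ : R -> R,
    (forall t, 0 < t -> derivable_pt_lim Q t (dQ t)) /\
    (forall t, 0 < t ->
       derivable_pt_lim dQ t (- (2 / t) * dQ t + Q t - Q t ^ 3)) /\
    (forall e, 0 < e -> exists d, 0 < d /\
       forall t, 0 < t < d -> Rabs (Q t - Q 0) < e /\ Rabs (dQ t) < e) /\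
    (forall e, 0 < e -> exists M, forall t, M < t -> Rabs (Q t) < e).

Definition F_solution (Q : R -> R) (eps : R) (F : R -> R) : Prop :=
  exists dF : R -> R,
    (forall t, 0 <= t -> derivable_pt_lim F t (dF t)) /\
    (forall t, 0 < t ->
       derivable_pt_lim dF t ((eps - 3 * Q t ^ 2) * F t)) /\
    F 0 = 0 /\ dF 0 = -1.

Definition first_pos_zero (f : R -> R) (t : R) : Prop :=
  0 < t /\ f t = 0 /\ forall s, 0 < s < t -> f s <> 0.

(* Main.v *)
Require Import Defs.
From Stdlib Require Import Reals Lra Psatz Classical.
Open Scope R_scope.

Lemma dcont f x l : derivable_pt_lim f x l -> continuity_pt f x.
Proof. intro H. exact (derivable_continuous_pt f x (exist _ l H)). Qed.

Lemma dext f x l l' : l = l' -> derivable_pt_lim f x l -> derivable_pt_lim f x l'.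
Proof. intros ->; auto. Qed.

Lemma dmul f g x lf lg : derivable_pt_lim f x lf -> derivable_pt_lim g x lg ->
  derivable_pt_lim (fun t => f t * g t) x (lf * g x + f x * lg).
Proof. intros; apply (derivable_pt_lim_mult f g); auto. Qed.
Lemma dadd f g x lf lg : derivable_pt_lim f x lf -> derivable_pt_lim g x lg ->
  derivable_pt_lim (fun t => f t + g t) x (lf + lg).
Proof. intros; apply (derivable_pt_lim_plus f g); auto. Qed.
Lemma dsub f g x lf lg : derivable_pt_lim f x lf -> derivable_pt_lim g x lg ->
  derivable_pt_lim (fun t => f t - g t) x (lf - lg).
Proof. intros; apply (derivable_pt_lim_minus f g); auto. Qed.
Lemma did x : derivable_pt_lim (fun t => t) x 1.
Proof. apply derivable_pt_lim_id. Qed.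
Lemma dcst a x : derivable_pt_lim (fun _ => a) x 0.
Proof. apply derivable_pt_lim_const. Qed.

Lemma mono_le f f' a b : a < b -> (forall c, a <= c <= b -> derivable_pt_lim f c (f' c)) ->
  (forall c, a < c < b -> f' c <= 0) -> f b <= f a.
Proof. intros Hab Hd Hs. destruct (MVT_cor2 f f' a b Hab Hd) as [c [Hc1 Hc2]].
  specialize (Hs c Hc2). nra. Qed.
Lemma mono_lt f f' a b : a < b -> (forall c, a <= c <= b -> derivable_pt_lim f c (f' c)) ->
  (forall c, a < c < b -> f' c < 0) -> f b < f a.
Proof. intros Hab Hd Hs. destruct (MVT_cor2 f f' a b Hab Hd) as [c [Hc1 Hc2]].
  specialize (Hs c Hc2). nra. Qed.
Lemma mono_ge f f' a b : a < b -> (forall c, a <= c <= b -> derivable_pt_lim f c (f' c)) ->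
  (forall c, a < c < b -> 0 <= f' c) -> f a <= f b.
Proof. intros Hab Hd Hs. destruct (MVT_cor2 f f' a b Hab Hd) as [c [Hc1 Hc2]].
  specialize (Hs c Hc2). nra. Qed.

Lemma deriv_sign_zero p z l : 0 < z -> derivable_pt_lim p z l -> p z = 0 ->
  (forall t, 0 < t < z -> 0 < p t) -> l <= 0.
Proof.
  intros Hz Hd Hp Hpos. destruct (Rle_or_lt l 0) as [|Hl]; auto. exfalso.
  destruct (Hd l Hl) as [[del Hdel] Hh]. simpl in Hh.
  set (h := - Rmin (del/2) (z/2)).
  assert (Hm1 : 0 < Rmin (del/2) (z/2)) by (apply Rmin_pos; lra).
  assert (Hm2 := Rmin_l (del/2) (z/2)). assert (Hm3 := Rmin_r (del/2) (z/2)).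
  assert (Hh0 : h <> 0) by (unfold h; lra).
  assert (Hha : Rabs h < del) by (unfold h; rewrite Rabs_Ropp, Rabs_pos_eq; lra).
  specialize (Hh h Hh0 Hha). rewrite Hp in Hh.
  assert (Hq : 0 < p (z + h)) by (apply Hpos; unfold h; lra).
  apply Rabs_def2 in Hh. destruct Hh as [_ Hh].
  assert (Hneg : (p (z+h) - 0)/h < 0).
  { unfold Rdiv. apply Rmult_pos_neg. lra. apply Rinv_neg. unfold h; lra. }
  lra.
Qed.

Lemma first_zero (g : R -> R) a s : 0 < a -> 0 < s ->
  (forall t, 0 < t -> continuity_pt g t) ->
  (forall t, 0 < t <= a -> 0 < g t) -> g s <= 0 ->
  exists z, 0 < z <= s /\ g z = 0 /\ forall t, 0 < t < z -> 0 < g t.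
Proof.
  intros Ha Hs Hc Hpos Hgs.
  assert (Has : a < s).
  { destruct (Rlt_or_le a s); auto. assert (0 < g s) by (apply Hpos; lra). lra. }
  set (E := fun x => 0 < x /\ x <= s /\ forall t, 0 < t <= x -> 0 < g t).
  assert (HEa : E a) by (split; [lra | split; [lra | auto]]).
  assert (Hb : bound E) by (exists s; intros x [_ [H _]]; auto).
  destruct (completeness E Hb (ex_intro _ a HEa)) as [z [Hub Hlub]].
  assert (Haz : a <= z) by (apply Hub; auto).
  assert (Hzs : z <= s) by (apply Hlub; intros x [_ [H _]]; auto).
  assert (Hbelow : forall t, 0 < t < z -> 0 < g t).
  { intros t Ht. destruct (Rle_or_lt t a) as [Hta|Hta]. apply Hpos; lra.
    destruct (Rlt_or_le 0 (g t)) as [|Hn]; auto; exfalso.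
    assert (Hub' : is_upper_bound E t).
    { intros x [Hx1 [Hx2 Hx3]]. destruct (Rle_or_lt x t); auto.
      exfalso. assert (0 < g t) by (apply Hx3; lra). lra. }
    specialize (Hlub t Hub'). lra. }
  exists z. split; [lra|]. split; auto.
  assert (Hcz := Hc z ltac:(lra)).
  unfold continuity_pt, continue_in, limit1_in, limit_in in Hcz. simpl in Hcz.
  unfold R_dist in Hcz.
  destruct (Rtotal_order (g z) 0) as [Hlt|[Heq|Hgt]]; auto; exfalso.
  - destruct (Hcz (- g z) ltac:(lra)) as [al [Hal Hx]].
    assert (H1 := Rmax_l (z - al/2) (z/2)). assert (H2 := Rmax_r (z - al/2) (z/2)).
    set (t := Rmax (z - al/2) (z/2)) in *.
    assert (Ht : t < z) by (unfold t; apply Rmax_lub_lt; lra).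
    assert (Hgt0 : 0 < g t). { apply Hbelow. lra. }
    assert (Hd : Rabs (g t - g z) < - g z).
    { apply Hx. split. unfold D_x, no_cond. split; [auto|lra]. rewrite Rabs_left; lra. }
    apply Rabs_def2 in Hd. lra.
  - assert (Hzs' : z < s) by (destruct (Req_dec z s); [subst; lra| lra]).
    destruct (Hcz (g z) ltac:(lra)) as [al [Hal Hx]].
    assert (H1 := Rmin_l (z + al/2) s). assert (H2 := Rmin_r (z + al/2) s).
    set (x := Rmin (z + al/2) s) in *.
    assert (Hxz : z < x) by (unfold x; apply Rmin_glb_lt; lra).
    assert (HEx : E x).
    { split; [lra|]. split; [lra|]. intros t Ht.
      destruct (Rtotal_order t z) as [Htz|[Htz|Htz]].
      apply Hbelow; lra. subst; auto.
      assert (Hd : Rabs (g t - g z) < g z).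
      { apply Hx. split. unfold D_x, no_cond. split; [auto|lra]. rewrite Rabs_right; lra. }
      apply Rabs_def2 in Hd. lra. }
    specialize (Hub x HEx). lra.
Qed.

Lemma Qbound (Q : R -> R) : (exists d, 0 < d /\ forall t, 0 < t < d -> Rabs (Q t - Q 0) < 1) ->
  exists d, 0 < d /\ forall t, 0 < t < d -> - (Rabs (Q 0) + 1) < Q t < Rabs (Q 0) + 1.
Proof.
  intros [d [Hd H]]. exists d. split; auto. intros t Ht. specialize (H t Ht).
  apply Rabs_def2 in H. assert (H1 := Rle_abs (Q 0)). assert (H2 := Rle_abs (- Q 0)).
  rewrite Rabs_Ropp in H2. lra.
Qed.

Lemma Fsol_near0 (Q : R -> R) eps F dF :
  (exists d, 0 < d /\ forall t, 0 < t < d -> Rabs (Q t - Q 0) < 1) ->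
  0 <= eps <= 1 ->
  (forall t, 0 <= t -> derivable_pt_lim F t (dF t)) ->
  (forall t, 0 < t -> derivable_pt_lim dF t ((eps - 3 * Q t ^ 2) * F t)) ->
  F 0 = 0 -> dF 0 = -1 ->
  exists d, 0 < d /\ exists B, forall t, 0 < t < d ->
    F t < 0 /\ Rabs (F t) <= 2 * t /\ Rabs (dF t) <= B.
Proof.
  intros HQ He HF HdF F0 dF0.
  destruct (Qbound Q HQ) as [d1 [Hd1 HQb]].
  set (K := Rabs (Q 0) + 1) in *.
  assert (HK : 0 < K) by (unfold K; assert (H := Rabs_pos (Q 0)); lra).
  assert (Hd0 := HF 0 (Rle_refl 0)). rewrite dF0 in Hd0.
  destruct (Hd0 (1/2) ltac:(lra)) as [[del Hdel] Hh]. simpl in Hh.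
  assert (HFs : forall h, 0 < h < del -> F h < 0 /\ Rabs (F h) <= 2 * h).
  { intros h Hh1. assert (Hh0 : h <> 0) by lra.
    assert (Hha : Rabs h < del) by (rewrite Rabs_pos_eq; lra).
    specialize (Hh h Hh0 Hha). rewrite Rplus_0_l, F0 in Hh.
    apply Rabs_def2 in Hh.
    assert (Heq : F h = ((F h - 0) / h) * h) by (field; lra).
    set (u := (F h - 0) / h) in *.
    split. nra. rewrite Rabs_left; nra. }
  assert (Hdd1 := Rmin_l del d1). assert (Hdd2 := Rmin_r del d1).
  set (d := Rmin del d1) in *.
  assert (Hd : 0 < d) by (apply Rmin_pos; lra).
  set (C := (1 + 3 * K^2) * (2 * d)).
  assert (HdFb : forall t, 0 < t < d -> Rabs ((eps - 3 * Q t ^ 2) * F t) <= C).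
  { intros t Ht. rewrite Rabs_mult. destruct (HFs t ltac:(lra)) as [_ HF2].
    assert (HQt := HQb t ltac:(lra)).
    assert (Ha : Rabs (eps - 3 * Q t ^ 2) <= 1 + 3 * K^2).
    { assert (Hq2 : Q t ^ 2 <= K ^ 2).
      { destruct HQt as [a b].
        assert (0 < (K - Q t) * (K + Q t)) by (apply Rmult_lt_0_compat; lra). nra. }
      assert (0 <= Q t ^ 2) by apply pow2_ge_0. assert (0 <= K ^ 2) by apply pow2_ge_0.
      apply Rabs_le. split; lra. }
    unfold C. apply Rmult_le_compat; try apply Rabs_pos; auto. lra. }
  exists (d/2). split; [lra|]. exists (Rabs (dF (d/2)) + C * d).
  intros t Ht. destruct (HFs t ltac:(lra)) as [HF1 HF2]. split; auto. split; auto.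
  destruct (Req_dec t (d/2)) as [->|Hne].
  - assert (0 <= C * d) by (unfold C; assert (0 <= K^2) by nra; apply Rmult_le_pos; nra). lra.
  - destruct (MVT_cor2 dF (fun c => (eps - 3 * Q c ^ 2) * F c) t (d/2) ltac:(lra))
      as [c [Hc1 Hc2]].
    { intros c Hc. apply HdF. lra. }
    assert (Hb := HdFb c ltac:(lra)).
    assert (Hx : dF t = dF (d/2) - (eps - 3 * Q c ^ 2) * F c * (d/2 - t)) by lra.
    rewrite Hx. eapply Rle_trans. apply Rabs_triang. rewrite Rabs_Ropp, Rabs_mult.
    apply Rplus_le_compat_l. rewrite (Rabs_pos_eq (d/2 - t)) by lra.
    apply Rmult_le_compat; try apply Rabs_pos; lra.
Qed.

Lemma r_deriv (Q dQ : R -> R) t :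
 0 < t ->
 derivable_pt_lim Q t (dQ t) ->
 derivable_pt_lim dQ t (- (2 / t) * dQ t + Q t - Q t ^ 3) ->
 derivable_pt_lim (fun t => Q t + t * dQ t) t (t * (Q t - Q t ^ 3)).
Proof.
  intros Ht H1 H2. eapply dext; [| apply dadd; [exact H1 | apply dmul; [apply did | exact H2]]].
  cbv beta. field. lra.
Qed.

Lemma r_first_zero (Q dQ : R -> R) :
 (forall t, 0 <= t -> 0 < Q t) ->
 (forall t, 0 < t -> derivable_pt_lim Q t (dQ t)) ->
 (forall t, 0 < t -> derivable_pt_lim dQ t (- (2 / t) * dQ t + Q t - Q t ^ 3)) ->
 (forall e, 0 < e -> exists d, 0 < d /\ forall t, 0 < t < d -> Rabs (Q t - Q 0) < e /\ Rabs (dQ t) < e) ->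
 (forall e, 0 < e -> exists M, forall t, M < t -> Rabs (Q t) < e) ->
 exists z, 0 < z /\ Q z + z * dQ z = 0 /\ forall t, 0 < t < z -> 0 < Q t + t * dQ t.
Proof.
  intros Qpos HdQ HddQ Hq0 Hdec.
  set (r := fun t => Q t + t * dQ t).
  assert (Hr : forall t, 0 < t -> derivable_pt_lim r t (t * (Q t - Q t ^ 3))).
  { intros t Ht. apply r_deriv; auto. }
  assert (Hq : forall t, 0 < t -> derivable_pt_lim (fun t => t * Q t) t (r t)).
  { intros t Ht. eapply dext; [| apply dmul; [apply did | apply HdQ; lra]]. unfold r; cbv beta; ring. }
  assert (HQ0 := Qpos 0 (Rle_refl 0)).
  destruct (Hq0 (Q 0 / 3) ltac:(lra)) as [d [Hd Hdd]].
  set (a := Rmin d 1 / 2).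
  assert (Ha1 := Rmin_l d 1). assert (Ha2 := Rmin_r d 1).
  assert (Ha0 : 0 < Rmin d 1) by (apply Rmin_pos; lra).
  assert (Ha : 0 < a) by (unfold a; lra).
  assert (Hrpos : forall t, 0 < t <= a -> 0 < r t).
  { intros t Ht. destruct (Hdd t ltac:(unfold a in Ht; lra)) as [H1 H2].
    apply Rabs_def2 in H1. apply Rabs_def2 in H2. unfold r.
    assert (t < 1) by (unfold a in Ht; lra). nra. }
  destruct (classic (exists s, 0 < s /\ r s <= 0)) as [[s [Hs Hrs]] | Hno].
  - destruct (first_zero r a s Ha Hs) as [z [Hz1 [Hz2 Hz3]]]; auto.
    intros t Ht. exact (dcont _ _ _ (Hr t Ht)).
    exists z. split; [lra|]. split; auto.
  - exfalso.
    assert (Hrp : forall t, 0 < t -> 0 < r t).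
    { intros t Ht. destruct (Rlt_or_le 0 (r t)); auto. exfalso. apply Hno. exists t; auto. }
    destruct (Hdec (1/2) ltac:(lra)) as [M HM].
    assert (HM1 := Rmax_l M 1). assert (HM2 := Rmax_r M 1).
    set (b := Rmax M 1 + 1) in *.
    assert (Hb : 1 < b) by (unfold b; lra).
    assert (HQb : forall t, b <= t -> 0 < Q t < 1/2).
    { intros t Ht. split. apply Qpos; lra. assert (H := HM t ltac:(unfold b in Ht; lra)).
      apply Rabs_def2 in H. lra. }
    assert (Hqinc : forall t, b <= t -> b * Q b <= t * Q t).
    { intros t Ht. destruct (Req_dec t b) as [->|Hne]; [lra|].
      apply (mono_ge (fun t => t * Q t) r b t). lra.
      intros c Hc. apply Hq; lra. intros c Hc. left; apply Hrp; lra. }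
    assert (Hqb : 0 < b * Q b) by (apply Rmult_lt_0_compat; [lra| apply Qpos; lra]).
    set (c := 3/4 * (b * Q b)).
    assert (Hc : 0 < c) by (unfold c; lra).
    assert (Hr' : forall t, b <= t -> c <= t * (Q t - Q t ^ 3)).
    { intros t Ht. destruct (HQb t Ht) as [H1 H2]. assert (H3 := Hqinc t Ht).
      assert (Hq2 : Q t ^ 2 <= 1/4) by nra.
      assert (E : t * (Q t - Q t ^ 3) = (t * Q t) * (1 - Q t ^ 2)) by ring.
      rewrite E. unfold c. assert (0 <= t * Q t) by lra. nra. }
    assert (Hrlin : forall s, b <= s -> c * (s - b) <= r s).
    { intros s Hs. destruct (Req_dec s b) as [->|Hne].
      assert (0 < r b) by (apply Hrp; lra). lra.
      destruct (MVT_cor2 r (fun t => t * (Q t - Q t ^ 3)) b s ltac:(lra)) as [x [Hx1 Hx2]].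
      intros x Hx. apply Hr; lra.
      assert (Hx3 := Hr' x ltac:(lra)). assert (0 < r b) by (apply Hrp; lra). nra. }
    set (t := 2 * b + 8 / c).
    assert (Hct : 8 <= c * t) by (unfold t; field_simplify; [nra|lra]).
    assert (Ht : 2 * b < t) by (unfold t; assert (0 < 8 / c) by (apply Rdiv_lt_0_compat; lra); lra).
    set (m := (t + b) / 2).
    destruct (MVT_cor2 (fun t => t * Q t) r m t ltac:(unfold m; lra)) as [x [Hx1 Hx2]].
    intros y Hy. apply Hq. unfold m in Hy; lra.
    assert (Hrx := Hrlin x ltac:(unfold m in Hx2; lra)).
    assert (Hqm := Hqinc m ltac:(unfold m; lra)).
    assert (Hgrow : c * (t - b) * (t - b) / 4 <= t * Q t).
    { assert (Hm : t - m = (t - b)/2) by (unfold m; field).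
      rewrite Hm in Hx1.
      assert (c * (m - b) <= c * (x - b)) by (apply Rmult_le_compat_l; lra).
      assert (Hm2 : m - b = (t - b)/2) by (unfold m; field).
      rewrite Hm2 in H.
      assert (c * ((t - b) / 2) * ((t - b) / 2) <= r x * ((t - b) / 2)).
      { apply Rmult_le_compat_r; lra. }
      nra. }
    destruct (HQb t ltac:(lra)) as [HQt1 HQt2].
    assert (Htb : t / 2 <= t - b) by lra.
    assert (c * (t/2) * (t/2) <= c * (t - b) * (t - b)).
    { assert (0 <= c*(t/2)) by (apply Rmult_le_pos; lra).
      assert (c*(t/2) <= c*(t-b)) by (apply Rmult_le_compat_l; lra).
      apply Rmult_le_compat; lra. }
    assert (c * t * t / 16 <= t * Q t) by lra.
    assert (t * (c * t) <= t * (16 * Q t)) by lra.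
    assert (c * t <= 16 * Q t) by (apply Rmult_le_reg_l with t; lra).
    lra.
Qed.

Lemma abs_prod x y X Y : Rabs x <= X -> Rabs y <= Y -> Rabs (x * y) <= X * Y.
Proof. intros. rewrite Rabs_mult. apply Rmult_le_compat; auto; apply Rabs_pos. Qed.

Lemma nonpos_from_small (W : R -> R) t2 C del : 0 < t2 -> 0 < del ->
  (forall s, 0 < s < t2 -> W t2 <= W s) -> (forall s, 0 < s < del -> W s <= s * C) ->
  W t2 <= 0.
Proof.
  intros Ht Hd Hm Hs. destruct (Rle_or_lt (W t2) 0) as [|HW]; auto. exfalso.
  set (C' := Rabs C + 1).
  assert (HC : 0 < C') by (unfold C'; assert (H := Rabs_pos C); lra).
  assert (HC2 : C <= C') by (unfold C'; assert (H := Rle_abs C); lra).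
  assert (Hm1 := Rmin_l (Rmin (t2/2) (del/2)) (W t2 / (2 * C'))).
  assert (Hm2 := Rmin_r (Rmin (t2/2) (del/2)) (W t2 / (2 * C'))).
  assert (Hm3 := Rmin_l (t2/2) (del/2)). assert (Hm4 := Rmin_r (t2/2) (del/2)).
  assert (Hp : 0 < Rmin (Rmin (t2/2) (del/2)) (W t2 / (2 * C'))).
  { apply Rmin_pos. apply Rmin_pos; lra. apply Rdiv_lt_0_compat; lra. }
  set (s := Rmin (Rmin (t2/2) (del/2)) (W t2 / (2 * C'))) in *.
  assert (H1 := Hm s ltac:(lra)). assert (H2 := Hs s ltac:(lra)).
  assert (s * C <= s * C') by (apply Rmult_le_compat_l; lra).
  assert (s * C' <= W t2 / (2 * C') * C') by (apply Rmult_le_compat_r; lra).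
  assert (W t2 / (2 * C') * C' = W t2 / 2) by (field; lra).
  lra.
Qed.

Lemma ratio_deriv (F G dF dG : R -> R) x : derivable_pt_lim F x (dF x) ->
  derivable_pt_lim G x (dG x) -> G x <> 0 ->
  derivable_pt_lim (fun t => F t / G t) x ((dF x * G x - dG x * F x) / (G x)²).
Proof. intros. apply (derivable_pt_lim_div F G); auto. Qed.

Lemma neg_before (F : R -> R) a t : 0 < a -> (forall s, 0 < s -> continuity_pt F s) ->
  (forall s, 0 < s <= a -> F s < 0) -> (forall s, 0 < s < t -> F s <> 0) ->
  forall s, 0 < s < t -> F s < 0.
Proof.
  intros Ha Hc Hn Hz s Hs. destruct (Rlt_or_le (F s) 0) as [|Hp]; auto. exfalso.
  destruct (first_zero (fun x => - F x) a s Ha ltac:(lra)) as [z [Hz1 [Hz2 _]]].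
  intros x Hx. apply continuity_pt_opp. auto.
  intros x Hx. specialize (Hn x Hx). lra. lra.
  apply (Hz z). lra. lra.
Qed.

Theorem lemma6p1 (Q : R -> R) (eps : R) (F F0 : R -> R) :
  ground_state_profile Q ->
  0 <= eps <= 1 ->
  F_solution Q eps F ->
  F_solution Q 0 F0 ->
  (exists s, 0 < s /\ 0 < F s) /\
  (exists te, first_pos_zero F te) /\
  (forall te t0, first_pos_zero F te -> first_pos_zero F0 t0 ->
     0 < t0 <= te).
Proof.
  intros [Qpos [dQ [HdQ [HddQ [Hq0 Hdec]]]]] He [dF [HF [HdF [HF0 HdF0]]]]
    [dG [HG [HdG [HG0 HdG0]]]].
  assert (HQ1 : exists d, 0 < d /\ forall t, 0 < t < d -> Rabs (Q t - Q 0) < 1).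
  { destruct (Hq0 1 ltac:(lra)) as [d [Hd H]]. exists d; split; auto. intros t Ht; apply H; auto. }
  destruct (Fsol_near0 Q eps F dF HQ1 He HF HdF HF0 HdF0) as [dn [Hdn [B HB]]].
  destruct (Fsol_near0 Q 0 F0 dG HQ1 ltac:(lra) HG HdG HG0 HdG0) as [dn0 [Hdn0 [B0 HB0]]].
  destruct (Qbound Q HQ1) as [dq [Hdq HQb]].
  set (K := Rabs (Q 0) + 1) in *.
  assert (HK : 0 < K) by (unfold K; assert (H := Rabs_pos (Q 0)); lra).
  destruct (Hq0 1 ltac:(lra)) as [dd [Hdd HdQb]].
  assert (HFc : forall t, 0 < t -> continuity_pt F t) by (intros t Ht; apply (dcont _ _ _ (HF t ltac:(lra)))).
  assert (HGc : forall t, 0 < t -> continuity_pt F0 t) by (intros t Ht; apply (dcont _ _ _ (HG t ltac:(lra)))).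
  assert (C1 : exists s, 0 < s /\ 0 < F s).
  { destruct (classic (exists s, 0 < s /\ 0 < F s)) as [|Hno]; auto. exfalso.
    assert (HFle : forall t, 0 < t -> F t <= 0).
    { intros t Ht. destruct (Rle_or_lt (F t) 0); auto. exfalso; apply Hno; exists t; auto. }
    destruct (r_first_zero Q dQ Qpos HdQ HddQ Hq0 Hdec) as [z [Hz [Hrz Hrpos]]].
    set (r := fun t => Q t + t * dQ t) in *.
    set (p := fun t => t * r t).
    set (p1 := fun t => r t + t * (t * (Q t - Q t * Q t * Q t))).
    assert (Hp : forall t, 0 < t -> derivable_pt_lim p t (p1 t)).
    { intros t Ht. unfold p. eapply dext; [| apply dmul; [apply did | apply (r_deriv Q dQ t Ht (HdQ t Ht) (HddQ t Ht))]].
      unfold p1, r. cbv beta. ring. }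
    assert (Hp1 : forall t, 0 < t -> derivable_pt_lim p1 t
                (3 * t * (Q t - Q t ^ 3) + t * t * (1 - 3 * Q t ^ 2) * dQ t)).
    { intros t Ht. unfold p1. eapply dext; [|
      apply dadd; [apply (r_deriv Q dQ t Ht (HdQ t Ht) (HddQ t Ht)) |
      apply dmul; [apply did | apply dmul; [apply did | apply dsub; [apply HdQ; auto |
      apply dmul; [apply dmul; apply HdQ; auto | apply HdQ; auto]]]]]].
      cbv beta. ring. }
    set (W := fun t => F t * p1 t - dF t * p t).
    assert (HW : forall t, 0 < t -> derivable_pt_lim W t (F t * ((1 - eps) * p t + 2 * t * Q t))).
    { intros t Ht. unfold W. eapply dext; [| apply dsub; apply dmul;
        [apply HF; lra | apply Hp1; auto | apply HdF; auto | apply Hp; auto]].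
      unfold p, p1, r. cbv beta. ring. }
    assert (Hppos : forall t, 0 < t < z -> 0 < p t).
    { intros t Ht. unfold p. apply Rmult_lt_0_compat. lra. apply Hrpos; auto. }
    assert (HWle : forall t, 0 < t < z -> F t * ((1 - eps) * p t + 2 * t * Q t) <= 0).
    { intros t Ht. assert (H1 := Hppos t Ht). assert (H2 := Qpos t ltac:(lra)).
      assert (H3 := HFle t ltac:(lra)).
      assert (0 <= (1 - eps) * p t + 2 * t * Q t) by nra. nra. }
    assert (HWlt : forall t, 0 < t < z -> F t < 0 -> F t * ((1 - eps) * p t + 2 * t * Q t) < 0).
    { intros t Ht HFt. assert (H1 := Hppos t Ht). assert (H2 := Qpos t ltac:(lra)).
      assert (0 < (1 - eps) * p t + 2 * t * Q t) by nra. nra. }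
    assert (Hpz : p z = 0) by (unfold p, r in *; cbv beta in *; rewrite Hrz; ring).
    assert (Hp1z : p1 z <= 0) by (apply (deriv_sign_zero p z); auto).
    assert (HWz : 0 <= W z).
    { unfold W. rewrite Hpz. assert (H := HFle z Hz). nra. }
    assert (Hm1 := Rmin_l (Rmin dn dq) (Rmin dd 1)).
    assert (Hm2 := Rmin_r (Rmin dn dq) (Rmin dd 1)).
    assert (Hm3 := Rmin_l dn dq). assert (Hm4 := Rmin_r dn dq).
    assert (Hm5 := Rmin_l dd 1). assert (Hm6 := Rmin_r dd 1).
    assert (Hdel : 0 < Rmin (Rmin dn dq) (Rmin dd 1)) by (repeat apply Rmin_pos; lra).
    set (del := Rmin (Rmin dn dq) (Rmin dd 1)) in *.
    set (P1 := K + 1 + (K + K * K * K)).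
    assert (Hsmall : forall s, 0 < s < del -> W s <= s * (2 * P1 + B * (K + 1))).
    { intros s Hs. destruct (HB s ltac:(lra)) as [_ [HFs HdFs]].
      destruct (HQb s ltac:(lra)) as [Ql Qu]. assert (Qp := Qpos s ltac:(lra)).
      destruct (HdQb s ltac:(lra)) as [_ HdQs]. apply Rabs_def2 in HdQs.
      assert (Hr : Rabs (r s) <= K + 1).
      { unfold r. apply Rabs_le. split; nra. }
      assert (Hq3 : 0 <= Q s * Q s * Q s <= K * K * K).
      { split. apply Rmult_le_pos; [apply Rmult_le_pos|]; lra.
        apply Rmult_le_compat; try lra. apply Rmult_le_pos; lra.
        apply Rmult_le_compat; lra. }
      assert (Hss : 0 < s * s < 1) by (split; nra).
      assert (Hp1s : Rabs (p1 s) <= P1).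
      { unfold p1, P1. eapply Rle_trans. apply Rabs_triang.
        apply Rplus_le_compat. auto.
        rewrite <- Rmult_assoc. rewrite Rabs_mult. rewrite (Rabs_pos_eq (s * s)) by lra.
        assert (Rabs (Q s - Q s * Q s * Q s) <= K + K * K * K) by (apply Rabs_le; split; lra).
        assert (s * s * Rabs (Q s - Q s * Q s * Q s) <= 1 * Rabs (Q s - Q s * Q s * Q s)).
        { apply Rmult_le_compat_r. apply Rabs_pos. lra. }
        lra. }
      assert (Hps : Rabs (p s) <= s * (K + 1)).
      { unfold p. rewrite Rabs_mult, Rabs_pos_eq by lra. apply Rmult_le_compat_l; lra. }
      assert (H1 := abs_prod _ _ _ _ HFs Hp1s).
      assert (H2 := abs_prod _ _ _ _ HdFs Hps).
      unfold W. assert (H3 := Rle_abs (F s * p1 s)). assert (H4 := Rle_abs (- (dF s * p s))).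
      rewrite Rabs_Ropp in H4. nra. }
    assert (Hm7 := Rmin_l del z). assert (Hm8 := Rmin_r del z).
    set (t1 := Rmin del z / 2).
    assert (Ht1 : 0 < t1 < z) by (unfold t1; assert (0 < Rmin del z) by (apply Rmin_pos; lra); lra).
    assert (Ht1d : t1 < del) by (unfold t1; assert (0 < Rmin del z) by (apply Rmin_pos; lra); lra).
    assert (HA : W z <= W t1).
    { apply (mono_le W (fun t => F t * ((1 - eps) * p t + 2 * t * Q t))). lra.
      intros c Hc; apply HW; lra. intros c Hc; apply HWle; lra. }
    assert (HBb : W t1 < W (t1 / 2)).
    { apply (mono_lt W (fun t => F t * ((1 - eps) * p t + 2 * t * Q t))). lra.
      intros c Hc; apply HW; lra. intros c Hc; apply HWlt. lra.
      destruct (HB c ltac:(lra)) as [H _]; auto. }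
    assert (HC : W (t1 / 2) <= 0).
    { apply (nonpos_from_small W (t1/2) (2 * P1 + B * (K + 1)) del); try lra; auto.
      intros s Hs. apply (mono_le W (fun t => F t * ((1 - eps) * p t + 2 * t * Q t))). lra.
      intros c Hc; apply HW; lra. intros c Hc; apply HWle; lra. }
    lra. }
  destruct C1 as [s [Hs HFs]].
  assert (Hneg : forall t, 0 < t <= dn / 2 -> F t < 0) by (intros t Ht; apply HB; lra).
  assert (Hneg0 : forall t, 0 < t <= dn0 / 2 -> F0 t < 0) by (intros t Ht; apply HB0; lra).
  split; [exists s; auto|]. split.
  { destruct (first_zero (fun x => - F x) (dn/2) s ltac:(lra) Hs) as [z [Hz1 [Hz2 Hz3]]].
    intros x Hx. apply continuity_pt_opp. auto.
    intros x Hx. specialize (Hneg x Hx). lra. lra.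
    exists z. split; [lra|]. split; [lra|]. intros t Ht. specialize (Hz3 t Ht). lra. }
  intros te t0 [Hte [HFte Hte2]] [Ht0 [HGt0 Ht02]]. split; auto.
  destruct (Rle_or_lt t0 te) as [|Hlt]; auto. exfalso.
  assert (HFn := neg_before F (dn/2) te ltac:(lra) HFc Hneg Hte2).
  assert (HGn := neg_before F0 (dn0/2) t0 ltac:(lra) HGc Hneg0 Ht02).
  set (V := fun t => F0 t * dF t - dG t * F t).
  assert (HV : forall t, 0 < t -> derivable_pt_lim V t (eps * F0 t * F t)).
  { intros t Ht. unfold V. eapply dext; [| apply dsub; apply dmul;
      [apply HG; lra | apply HdF; auto | apply HdG; auto | apply HF; lra]].
    ring. }
  assert (HVge : forall t, 0 < t <= te -> 0 <= V t).
  { intros t Ht.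
    assert (Hm3 := Rmin_l dn dn0). assert (Hm4 := Rmin_r dn dn0).
    assert (Hpos : 0 < Rmin dn dn0) by (apply Rmin_pos; lra).
    set (mV := fun t => - V t).
    assert (mV t <= 0).
    { apply (nonpos_from_small mV t (2 * B + 2 * B0) (Rmin dn dn0)); try lra.
      - intros s' Hs'. unfold mV. assert (V s' <= V t); [|lra].
        apply (mono_ge V (fun t => eps * F0 t * F t)). lra.
        intros c Hc; apply HV; lra.
        intros c Hc. assert (H1 := HFn c ltac:(lra)). assert (H2 := HGn c ltac:(lra)).
        assert (0 <= F0 c * F c) by nra. destruct He. nra.
      - intros s' Hs'. unfold mV, V.
        destruct (HB s' ltac:(lra)) as [_ [H1 H2]]. destruct (HB0 s' ltac:(lra)) as [_ [H3 H4]].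
        assert (H5 := abs_prod _ _ _ _ H3 H2). assert (H6 := abs_prod _ _ _ _ H4 H1).
        assert (H7 := Rle_abs (- (F0 s' * dF s'))). assert (H8 := Rle_abs (dG s' * F s')).
        rewrite Rabs_Ropp in H7. nra. }
    unfold mV in H. lra. }
  assert (HR : F (te/2) / F0 (te/2) <= F te / F0 te).
  { apply (mono_ge (fun t => F t / F0 t) (fun x => (dF x * F0 x - dG x * F x) / (F0 x)²)). lra.
    intros c Hc. apply ratio_deriv. apply HF; lra. apply HG; lra.
    assert (F0 c < 0) by (apply HGn; lra). lra.
    intros c Hc. assert (F0 c < 0) by (apply HGn; lra).
    assert (H1 := HVge c ltac:(lra)). unfold V in H1.
    unfold Rdiv. apply Rmult_le_pos. lra. left. apply Rinv_0_lt_compat. apply Rsqr_pos_lt. lra. }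
  rewrite HFte in HR. unfold Rdiv in HR. rewrite Rmult_0_l in HR.
  assert (H1 := HFn (te/2) ltac:(lra)). assert (H2 := HGn (te/2) ltac:(lra)).
  assert (0 < F (te/2) * / F0 (te/2)).
  { assert (/ F0 (te/2) < 0) by (apply Rinv_lt_0_compat; lra). nra. }
  lra.
Qed.
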